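(* Let $n\ge 2$ be an integer that is not a perfect square, and let $a,b$ be positive integers with $a^2-nb^2=1$. Put $u=a+b\sqrt n$, and let $h_j/k_j$ ($j\ge0$) be the convergents of the simple continued fraction expansion of $u$. Then $$\mathcal L\left(\frac1{u^2}\right)=\sum_{k=1}^{\infty}\mathcal L\left(\frac{1}{h_{2k-1}^2}\right).$$
   Context: $\mathcal L$ is the Rogers dilogarithm: for real $z\le1$, $\mathcal L(z)=\mathrm{Li}_2(z)+\tfrac12\log|z|\log(1-z)$, where $\mathrm{Li}_2(z)=\sum_{m\ge1}z^m/m^2$. If $u=[c_0,c_1,c_2,\dots]$ is the simple continued fraction expansion of $u$ ($c_0=\lfloor u\rfloor$, $c_i\ge1$ integers), the numerators and denominators of convergents are defined by $h_{-2}=0,h_{-1}=1,k_{-2}=1,k_{-1}=0$ and $h_i=c_ih_{i-1}+h_{i-2}$, $k_i=c_ik_{i-1}+k_{i-2}$ for $i\ge0$, so that $[c_0,\dots,c_i]=h_i/k_i$. *)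

(* Defs.v *)
From Stdlib Require Import Reals Lra Lia ZArith ClassicalEpsilon.
Open Scope R_scope.

(* The limit of a real sequence (chosen by epsilon; meaningful when the
   sequence converges, which is the case for all uses below). *)
Definition seq_lim (s : nat -> R) : R :=
  epsilon (inhabits 0) (fun l => Un_cv s l).

Definition Li2 (z : R) : R :=
  seq_lim (fun N => sum_f_R0 (fun m => z ^ (S m) / (INR (S m)) ^ 2) N).

Definition RogersL (z : R) : R :=
  Li2 z + / 2 * ln (Rabs z) * ln (1 - z).

Definition floorR (x : R) : Z := (up x - 1)%Z.

Fixpoint cf_rem (u : R) (i : nat) : R :=
  match i with
  | O => u
  | S j => / (cf_rem u j - IZR (floorR (cf_rem u j)))
  end.

Definition cf_coef (u : R) (i : nat) : Z := floorR (cf_rem u i).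

(* cf_hk u m = ((h_{m-2}, h_{m-1}), (k_{m-2}, k_{m-1})) *)
Fixpoint cf_hk (u : R) (m : nat) : (Z * Z) * (Z * Z) :=
  match m with
  | O => ((0%Z, 1%Z), (1%Z, 0%Z))
  | S i =>
      let '((h2, h1), (k2, k1)) := cf_hk u i in
      ((h1, (cf_coef u i * h1 + h2)%Z), (k1, (cf_coef u i * k1 + k2)%Z))
  end.

Definition cf_h (u : R) (i : nat) : Z := snd (fst (cf_hk u (S i))).
Definition cf_k (u : R) (i : nat) : Z := snd (snd (cf_hk u (S i))).

(* Main.v *)
Require Import Defs.
From Stdlib Require Import Reals ZArith.
From Stdlib Require Import Lra Lia ClassicalEpsilon.
From Coquelicot Require Import Coquelicot.
Open Scope R_scope.

Definition cc (n : nat) : R :=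
  match n with O => 0 | S m => / (INR (S m)) ^ 2 end.

Lemma cc_bound n : Rabs (cc n) <= 1.
Proof.
  destruct n as [|m]; [change (cc 0) with 0 | change (cc (S m)) with (/ INR (S m) ^ 2)].
  - rewrite Rabs_R0; lra.
  - assert (H1 : 1 <= INR (S m)) by (rewrite S_INR; pose proof (pos_INR m); lra).
    rewrite Rabs_right.
    + assert (H2 : 1 <= INR (S m) ^ 2) by (rewrite <- (pow1 2); apply pow_incr; lra).
      rewrite <- Rinv_1. apply Rinv_le_contravar; lra.
    + left; apply Rinv_0_lt_compat; apply pow_lt; lra.
Qed.

Lemma cc_rad : Rbar_le 1 (CV_radius cc).
Proof.
  destruct (CV_radius_bounded cc) as [H _].
  apply H. exists 1. intros k. rewrite pow1, Rmult_1_r. apply cc_bound.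
Qed.

Lemma in_rad z : Rabs z < 1 -> Rbar_lt (Rabs z) (CV_radius cc).
Proof.
  intros Hz. eapply Rbar_lt_le_trans; [|apply cc_rad]. simpl. exact Hz.
Qed.

Lemma Un_cv_S (s : nat -> R) l : Un_cv s l -> Un_cv (fun N => s (S N)) l.
Proof.
  intros H e He. destruct (H e He) as [N HN]. exists N. intros k Hk.
  apply HN. lia.
Qed.

Lemma seq_lim_eq s l : Un_cv s l -> seq_lim s = l.
Proof.
  intros H. unfold seq_lim.
  eapply UL_sequence; [|exact H]. apply (epsilon_spec (inhabits 0) (fun l => Un_cv s l) (ex_intro _ l H)).
Qed.

Lemma Li2_psum z N :
  sum_f_R0 (fun m => z ^ (S m) / (INR (S m)) ^ 2) N =
  sum_f_R0 (fun k => cc k * z ^ k) (S N).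
Proof.
  induction N as [|N IH].
  - simpl sum_f_R0. change (cc 0) with 0. change (cc 1) with (/ INR 1 ^ 2).
    unfold Rdiv. ring.
  - rewrite tech5, IH. rewrite (tech5 _ (S N)). change (cc (S (S N))) with (/ INR (S (S N)) ^ 2).
    unfold Rdiv. ring.
Qed.

Lemma Li2_eq z : Rabs z < 1 -> Li2 z = PSeries cc z.
Proof.
  intros Hz. unfold Li2. apply seq_lim_eq.
  assert (H := PSeries_correct cc z (CV_radius_inside _ _ (in_rad z Hz))).
  apply is_pseries_R in H. apply is_series_Reals in H.
  unfold infinite_sum in H.
  intros e He. destruct (H e He) as [N HN]. exists N. intros k Hk.
  rewrite Li2_psum. apply HN. lia.
Qed.

Definition dd := PS_derive cc.
Definition gg : nat -> R := PS_incr_1 dd.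

Lemma INR_S_pos k : 0 < INR (S k).
Proof. rewrite S_INR; pose proof (pos_INR k); lra. Qed.

Lemma dd_val k : dd k = / INR (S k).
Proof.
  unfold dd, PS_derive. change (cc (S k)) with (/ INR (S k) ^ 2).
  pose proof (INR_S_pos k). field. lra.
Qed.

Lemma gg_der k : PS_derive gg k = 1.
Proof.
  unfold PS_derive, gg. change (PS_incr_1 dd (S k)) with (dd k).
  rewrite dd_val. pose proof (INR_S_pos k). field. lra.
Qed.

Lemma rad_dd z : Rabs z < 1 -> Rbar_lt (Rabs z) (CV_radius dd).
Proof. intros; unfold dd; rewrite CV_radius_derive; now apply in_rad. Qed.

Lemma rad_gg z : Rabs z < 1 -> Rbar_lt (Rabs z) (CV_radius gg).
Proof. intros; unfold gg; rewrite CV_radius_incr_1; now apply rad_dd. Qed.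

Lemma geomP x : Rabs x < 1 -> PSeries (fun _ => 1) x = / (1 - x).
Proof.
  intros Hx. apply is_pseries_unique. apply is_pseries_R.
  eapply is_series_ext; [|apply (is_series_geom x Hx)].
  intros k; simpl; ring.
Qed.

Definition hh (t : R) := PSeries gg t + ln (1 - t).

Lemma hh_der t : Rabs t < 1 -> is_derive hh t 0.
Proof.
  intros Ht.
  assert (H1 : is_derive (PSeries gg) t (/ (1 - t))).
  { rewrite <- geomP by exact Ht.
    erewrite PSeries_ext; [apply is_derive_PSeries, rad_gg, Ht|].
    intros k; symmetry; apply gg_der. }
  assert (Ht' : 0 < 1 - t) by (apply Rabs_def2 in Ht; lra).
  assert (H2 : is_derive (fun t => ln (1 - t)) t (- / (1 - t))).
  { auto_derive; [exact Ht'|]. field. lra. }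
  replace 0 with (/ (1 - t) + - / (1 - t)) by ring.
  apply (is_derive_plus (PSeries gg) (fun t => ln (1 - t))); assumption.
Qed.

Lemma hh_zero x : Rabs x < 1 -> hh x = 0.
Proof.
  intros Hx.
  assert (Hin : forall t, Rmin 0 x <= t <= Rmax 0 x -> Rabs t < 1).
  { intros t [H1 H2]. unfold Rmin, Rmax in *. apply Rabs_def2 in Hx.
    destruct (Rle_dec 0 x); apply Rabs_def1; lra. }
  destruct (MVT_gen hh 0 x (fun _ => 0)) as [c [_ Hc]].
  - intros t Ht. apply hh_der, Hin; lra.
  - intros t Ht. apply continuity_pt_filterlim.
    apply (ex_derive_continuous hh). eexists. apply hh_der, Hin, Ht.
  - assert (H0 : hh 0 = 0).
    { unfold hh. rewrite PSeries_0. unfold gg. simpl. rewrite Rminus_0_r, ln_1. unfold zero; simpl; ring. }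
    lra.
Qed.

Lemma ln1m x : Rabs x < 1 -> x * PSeries dd x = - ln (1 - x).
Proof.
  intros Hx. pose proof (hh_zero x Hx) as H. unfold hh, gg in H.
  rewrite PSeries_incr_1 in H. lra.
Qed.

Lemma Li2_der x : Rabs x < 1 -> is_derive Li2 x (PSeries dd x).
Proof.
  intros Hx.
  apply (is_derive_ext_loc (PSeries cc)).
  - assert (He : 0 < 1 - Rabs x) by lra.
    exists (mkposreal _ He). intros y Hy.
    symmetry; apply Li2_eq.
    unfold ball in Hy; simpl in Hy; unfold AbsRing_ball, abs, minus, plus, opp in Hy; simpl in Hy.
    pose proof (Rabs_triang_inv y x). unfold Rminus in *. lra.
  - apply is_derive_PSeries, in_rad, Hx.
Qed.

Definition Ld (x : R) := - / 2 * (ln (1 - x) / x + ln x / (1 - x)).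

Lemma L_der x : 0 < x < 1 -> is_derive RogersL x (Ld x).
Proof.
  intros Hx.
  assert (Hx1 : Rabs x < 1) by (rewrite Rabs_right; lra).
  apply (is_derive_ext_loc (fun t => Li2 t + / 2 * ln t * ln (1 - t))).
  - assert (He : 0 < x) by lra.
    exists (mkposreal _ He). intros y Hy.
    unfold ball in Hy; simpl in Hy; unfold AbsRing_ball, abs, minus, plus, opp in Hy; simpl in Hy.
    unfold RogersL. apply Rabs_def2 in Hy. rewrite (Rabs_right y) by lra. reflexivity.
  - assert (HP : PSeries dd x = - ln (1 - x) / x).
    { pose proof (ln1m x Hx1). field_simplify; [|lra]. rewrite <- H. field. lra. }
    replace (Ld x) with (PSeries dd x + (/ 2 * (/ x * ln (1 - x) + ln x * (- / (1 - x))))).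
    + apply (is_derive_plus Li2 (fun t => / 2 * ln t * ln (1 - t))).
      * apply Li2_der; exact Hx1.
      * auto_derive; [lra|]. unfold Rminus. field. lra.
    + rewrite HP. unfold Ld. field. lra.
Qed.

Lemma L_cont x : 0 < x < 1 -> continuity_pt RogersL x.
Proof.
  intros Hx. apply continuity_pt_filterlim.
  apply (ex_derive_continuous RogersL). eexists. apply L_der, Hx.
Qed.

Lemma ln_lt_id y : 0 < y -> ln y < y.
Proof. intros Hy. pose proof (exp_ineq1_le (ln y)). rewrite exp_ln in H by lra. lra. Qed.

Lemma tlnt_bound t : 0 < t < 1 -> Rabs (t * ln t) <= 2 * sqrt t.
Proof.
  intros Ht.
  assert (Hs : 0 < sqrt t) by (apply sqrt_lt_R0; lra).
  assert (Hss := sqrt_sqrt t (Rlt_le _ _ (proj1 Ht))).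
  assert (Hl : ln t = 2 * ln (sqrt t)).
  { rewrite <- Hss at 1. rewrite ln_mult by lra. ring. }
  assert (Hneg : ln t < 0). { rewrite <- ln_1. apply ln_increasing; lra. }
  assert (H1 : ln (/ sqrt t) < / sqrt t) by (apply ln_lt_id, Rinv_0_lt_compat, Hs).
  rewrite ln_Rinv in H1 by lra.
  rewrite Rabs_left by nra.
  assert (H2 : - ln t < 2 / sqrt t) by (unfold Rdiv; lra).
  assert (H3 : t * (- ln t) <= t * (2 / sqrt t)) by (apply Rmult_le_compat_l; lra).
  replace (t * (2 / sqrt t)) with (2 * sqrt t) in H3.
  - lra.
  - rewrite <- Hss at 2. field. lra.
Qed.

Lemma tlnt_cv (t : nat -> R) : (forall k, 0 < t k < 1) -> Un_cv t 0 ->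
  Un_cv (fun k => t k * ln (t k)) 0.
Proof.
  intros Ht Hc.
  assert (Hs := continuity_seq sqrt t 0 (continuity_pt_sqrt 0 (Rle_refl 0)) Hc).
  rewrite sqrt_0 in Hs.
  intros e He. destruct (Hs (e / 2)) as [N HN]; [lra|].
  exists N. intros k Hk. specialize (HN k Hk). unfold R_dist in *.
  rewrite Rminus_0_r in *. pose proof (tlnt_bound _ (Ht k)).
  rewrite Rabs_right in HN by (apply Rle_ge, sqrt_pos). lra.
Qed.

Lemma cv_const (c : R) : Un_cv (fun _ => c) c.
Proof. intros e He. exists 0%nat. intros. unfold R_dist. rewrite Rminus_diag, Rabs_R0. lra. Qed.

Lemma L_seq0 (t : nat -> R) : (forall k, 0 < t k < 1) -> Un_cv t 0 ->
  Un_cv (fun k => RogersL (t k)) 0.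
Proof.
  intros Ht Hc.
  assert (Habs : forall k, Rabs (t k) < 1).
  { intros k; specialize (Ht k); rewrite Rabs_right; lra. }
  assert (H1 : Un_cv (fun k => PSeries cc (t k)) 0).
  { replace 0 with (PSeries cc 0) by (rewrite PSeries_0; reflexivity).
    apply continuity_seq; [|exact Hc].
    apply PSeries_continuity. rewrite Rabs_R0. eapply Rbar_lt_le_trans; [|apply cc_rad]. simpl; lra. }
  assert (H2 : Un_cv (fun k => PSeries dd (t k)) (PSeries dd 0)).
  { apply continuity_seq; [|exact Hc].
    apply PSeries_continuity. apply rad_dd. rewrite Rabs_R0; lra. }
  assert (H3 := CV_mult _ _ _ _ (tlnt_cv t Ht Hc) H2).
  assert (H4 := CV_plus _ _ _ _ H1 (CV_mult _ _ _ _ (cv_const (- / 2)) H3)).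
  replace 0 with (0 + - / 2 * (0 * PSeries dd 0)) by ring.
  eapply Un_cv_ext; [|exact H4].
  intros k. simpl. unfold RogersL. rewrite Li2_eq by apply Habs.
  rewrite Rabs_right by (specialize (Ht k); lra).
  pose proof (ln1m (t k) (Habs k)).
  replace (ln (1 - t k)) with (- (t k * PSeries dd (t k))) by lra. ring.
Qed.

Lemma comp_L (g : R -> R) x dg : 0 < g x < 1 -> is_derive g x dg ->
  is_derive (fun t => RogersL (g t)) x (dg * Ld (g x)).
Proof.
  intros H1 H2. exact (is_derive_comp RogersL g x (Ld (g x)) dg (L_der _ H1) H2).
Qed.

Section Five.
Variable y : R.
Hypothesis Hy : 0 < y < 1.

Definition XX (t : R) := t * (1 - y) / (1 - t * y).
Definition YY (t : R) := y * (1 - t) / (1 - t * y).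
Definition EE (t : R) := RogersL t + RogersL y - RogersL (t * y) - RogersL (XX t) - RogersL (YY t).

Lemma alg_id x lx ly l1x l1y l1xy : 0 < x < 1 ->
  let X := XX x in let Y := YY x in
  - / 2 * (l1x / x + lx / (1 - x)) + 0
  - y * (- / 2 * ((l1xy) / (x * y) + (lx + ly) / (1 - x * y)))
  - (1 - y) / (1 - x * y) ^ 2 * (- / 2 * ((l1x - l1xy) / X + (lx + l1y - l1xy) / (1 - X)))
  - y * (y - 1) / (1 - x * y) ^ 2 * (- / 2 * ((l1y - l1xy) / Y + (ly + l1x - l1xy) / (1 - Y))) = 0.
Proof.
  intros Hx X Y. unfold X, Y, XX, YY.
  assert (0 < 1 - x * y) by nra.
  field. repeat split; nra.
Qed.

Lemma XX_range x : 0 < x < 1 -> 0 < XX x < 1.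
Proof. intros Hx. unfold XX. assert (0 < 1 - x * y) by nra.
  split. - apply Rdiv_lt_0_compat; nra. - apply Rmult_lt_reg_r with (1 - x * y); [lra|].
  unfold Rdiv. rewrite Rmult_assoc, Rinv_l by lra. nra. Qed.

Lemma YY_range x : 0 < x < 1 -> 0 < YY x < 1.
Proof. intros Hx. unfold YY. assert (0 < 1 - x * y) by nra.
  split. - apply Rdiv_lt_0_compat; nra. - apply Rmult_lt_reg_r with (1 - x * y); [lra|].
  unfold Rdiv. rewrite Rmult_assoc, Rinv_l by lra. nra. Qed.

Lemma EE_der x : 0 < x < 1 -> is_derive EE x 0.
Proof.
  intros Hx.
  assert (Hd : 0 < 1 - x * y) by nra.
  pose proof (XX_range x Hx) as HX. pose proof (YY_range x Hx) as HY.
  assert (D1 : is_derive RogersL x (Ld x)) by (apply L_der; exact Hx).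
  assert (D2 : is_derive (fun _ : R => RogersL y) x 0) by exact (is_derive_const (RogersL y) x).
  assert (D3 : is_derive (fun t => RogersL (t * y)) x (y * Ld (x * y))).
  { apply (comp_L (fun t => t * y)); [simpl; nra|]. auto_derive; [exact I|ring]. }
  assert (D4 : is_derive (fun t => RogersL (XX t)) x ((1 - y) / (1 - x * y) ^ 2 * Ld (XX x))).
  { apply (comp_L XX); [exact HX|]. unfold XX. auto_derive; [lra|]. field. lra. }
  assert (D5 : is_derive (fun t => RogersL (YY t)) x (y * (y - 1) / (1 - x * y) ^ 2 * Ld (YY x))).
  { apply (comp_L YY); [exact HY|]. unfold YY. auto_derive; [lra|]. field. lra. }
  assert (HD : is_derive EE x (Ld x + 0 - y * Ld (x * y) - (1 - y) / (1 - x * y) ^ 2 * Ld (XX x)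
                                - y * (y - 1) / (1 - x * y) ^ 2 * Ld (YY x))).
  { unfold EE.
    apply (is_derive_minus (fun t => RogersL t + RogersL y - RogersL (t * y) - RogersL (XX t)) (fun t => RogersL (YY t))); [|exact D5].
    apply (is_derive_minus (fun t => RogersL t + RogersL y - RogersL (t * y)) (fun t => RogersL (XX t))); [|exact D4].
    apply (is_derive_minus (fun t => RogersL t + RogersL y) (fun t => RogersL (t * y))); [|exact D3].
    apply (is_derive_plus RogersL (fun _ => RogersL y)); assumption. }
  replace 0 with (Ld x + 0 - y * Ld (x * y) - (1 - y) / (1 - x * y) ^ 2 * Ld (XX x)
                                - y * (y - 1) / (1 - x * y) ^ 2 * Ld (YY x)); [exact HD|].
  unfold Ld at 2 3 4.
  replace (1 - XX x) with ((1 - x) / (1 - x * y)) by (unfold XX; field; lra).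
  replace (1 - YY x) with ((1 - y) / (1 - x * y)) by (unfold YY; field; lra).
  rewrite (ln_div (1 - x)) by lra. rewrite (ln_div (1 - y)) by lra.
  unfold XX at 2, YY at 2.
  rewrite (ln_div (x * (1 - y))) by nra. rewrite (ln_div (y * (1 - x))) by nra.
  rewrite !ln_mult by lra.
  replace ((1 - x) / (1 - x * y)) with (1 - XX x) by (unfold XX; field; lra).
  replace ((1 - y) / (1 - x * y)) with (1 - YY x) by (unfold YY; field; lra).
  etransitivity; [|exact (alg_id x (ln x) (ln y) (ln (1 - x)) (ln (1 - y)) (ln (1 - x * y)) Hx)].
  cbv zeta. unfold Ld. ring.
Qed.

Lemma EE_const x1 x2 : 0 < x1 < 1 -> 0 < x2 < 1 -> EE x1 = EE x2.
Proof.
  intros H1 H2.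
  assert (Hin : forall t, Rmin x1 x2 <= t <= Rmax x1 x2 -> 0 < t < 1).
  { intros t [Ha Hb]. unfold Rmin, Rmax in *. destruct (Rle_dec x1 x2); lra. }
  destruct (MVT_gen EE x1 x2 (fun _ => 0)) as [c [_ Hc]].
  - intros t Ht. apply EE_der, Hin; lra.
  - intros t Ht. apply continuity_pt_filterlim.
    apply (ex_derive_continuous EE). eexists. apply EE_der, Hin, Ht.
  - lra.
Qed.

Lemma XX_cont : continuity_pt XX 0.
Proof.
  apply continuity_pt_filterlim. apply (ex_derive_continuous XX).
  unfold XX. auto_derive. lra.
Qed.

Lemma YY_cont : continuity_pt YY 0.
Proof.
  apply continuity_pt_filterlim. apply (ex_derive_continuous YY).
  unfold YY. auto_derive. lra.
Qed.

Lemma EE_zero x : 0 < x < 1 -> EE x = 0.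
Proof.
  intros Hx.
  set (t := fun k : nat => (/ 2) ^ (S k)).
  assert (Ht : forall k, 0 < t k < 1).
  { intros k. unfold t. split. - apply pow_lt; lra.
    - apply pow_lt_1_compat; [lra|lia]. }
  assert (Hc : Un_cv t 0).
  { intros e He. destruct (pow_lt_1_zero (/ 2) ltac:(rewrite Rabs_right; lra) e He) as [N HN].
    exists N. intros k Hk. unfold R_dist. rewrite Rminus_0_r. apply HN. lia. }
  assert (C1 := L_seq0 t Ht Hc).
  assert (Hty : forall k, 0 < t k * y < 1) by (intros k; specialize (Ht k); split; nra).
  assert (C3 := L_seq0 (fun k => t k * y) Hty
     ltac:(replace 0 with (0 * y) by ring; apply CV_mult; [exact Hc|apply cv_const])).
  assert (HX0 : XX 0 = 0) by (unfold XX; field; lra).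
  assert (HY0 : YY 0 = y) by (unfold YY; field; lra).
  assert (C4 := L_seq0 (fun k => XX (t k)) (fun k => XX_range _ (Ht k))
     ltac:(rewrite <- HX0; apply continuity_seq; [apply XX_cont|exact Hc])).
  assert (C5' : Un_cv (fun k => YY (t k)) y)
    by (rewrite <- HY0 at 1; apply continuity_seq; [apply YY_cont|exact Hc]).
  assert (C5 := continuity_seq RogersL _ _ (L_cont y Hy) C5').
  assert (Hall := CV_minus _ _ _ _ (CV_minus _ _ _ _ (CV_minus _ _ _ _
                   (CV_plus _ _ _ _ C1 (cv_const (RogersL y))) C3) C4) C5).
  assert (Hcst : Un_cv (fun k => EE (t k)) (EE x)).
  { eapply Un_cv_ext; [|apply (cv_const (EE x))]. intros k. apply EE_const; auto. }
  eapply UL_sequence; [exact Hcst|].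
  replace 0 with (0 + RogersL y - 0 - 0 - RogersL y) by ring.
  eapply Un_cv_ext; [|exact Hall]. intros k. reflexivity.
Qed.
End Five.

Lemma five x y : 0 < x < 1 -> 0 < y < 1 ->
  RogersL x + RogersL y = RogersL (x * y) + RogersL (x * (1 - y) / (1 - x * y))
                         + RogersL (y * (1 - x) / (1 - x * y)).
Proof.
  intros Hx Hy. pose proof (EE_zero y Hy x Hx) as H. unfold EE, XX, YY in H. lra.
Qed.

Section Tele.
Variable q : R.
Hypothesis Hq : 0 < q < 1.

Definition Aq (w : R) := w * (1 - q) / (1 - q * w).
Definition Bq (w : R) := q * (1 - w) / (1 - q * w).
Definition Tq (w : R) := w * (1 - q) ^ 2 / (1 - q * w) ^ 2.
Definition Fq (w : R) := RogersL (Aq w) - RogersL (Bq w).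

Lemma Aq_range w : 0 < w < 1 -> 0 < Aq w < 1.
Proof. intros Hw. unfold Aq. assert (0 < 1 - q * w) by nra.
  split. - apply Rdiv_lt_0_compat; nra. - apply Rmult_lt_reg_r with (1 - q * w); [lra|].
  unfold Rdiv. rewrite Rmult_assoc, Rinv_l by lra. nra. Qed.

Lemma Bq_range w : 0 < w < 1 -> 0 < Bq w < 1.
Proof. intros Hw. unfold Bq. assert (0 < 1 - q * w) by nra.
  split. - apply Rdiv_lt_0_compat; nra. - apply Rmult_lt_reg_r with (1 - q * w); [lra|].
  unfold Rdiv. rewrite Rmult_assoc, Rinv_l by lra. nra. Qed.

Lemma step w : 0 < w < 1 -> RogersL (Tq w) = Fq w - Fq (q * w).
Proof.
  intros Hw.
  assert (Hqw : 0 < q * w < 1) by (split; nra).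
  pose proof (five (Aq w) (Bq (q * w)) (Aq_range w Hw) (Bq_range _ Hqw)) as H.
  assert (H1 : 0 < 1 - q * w) by nra.
  assert (H2 : 0 < 1 - q * (q * w)) by nra.
  assert (E1 : Aq w * Bq (q * w) = Aq (q * w)) by (unfold Aq, Bq; field; lra).
  assert (E2 : Aq w * (1 - Bq (q * w)) / (1 - Aq w * Bq (q * w)) = Tq w).
  { rewrite E1. unfold Aq, Bq, Tq. field. all: repeat split; try lra.
    all: intro Hc; field_simplify in Hc; try lra; nra. }
  assert (E3 : Bq (q * w) * (1 - Aq w) / (1 - Aq w * Bq (q * w)) = Bq w).
  { rewrite E1. unfold Aq, Bq. field. all: repeat split; try lra.
    all: intro Hc; field_simplify in Hc; try lra; nra. }
  rewrite E2, E3, E1 in H. unfold Fq. lra.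
Qed.

Lemma qpow_range k : 0 < q ^ (S k) < 1.
Proof. split; [apply pow_lt; lra| apply pow_lt_1_compat; [lra|lia]]. Qed.

Lemma partial N : sum_f_R0 (fun k => RogersL (Tq (q ^ (S k)))) N = Fq q - Fq (q ^ (S (S N))).
Proof.
  induction N as [|N IH].
  - cbn [sum_f_R0]. rewrite step by apply (qpow_range 0).
    replace (q * q ^ 1) with (q ^ 2) by ring. rewrite pow_1. ring.
  - rewrite tech5, IH, step by apply qpow_range.
    replace (q * q ^ S (S N)) with (q ^ S (S (S N))) by (simpl; ring). ring.
Qed.

Lemma Fq_q : Fq q = 0.
Proof. unfold Fq, Aq, Bq. ring. Qed.

Lemma tele : infinite_sum (fun k => RogersL (Tq (q ^ (S k)))) (RogersL q).
Proof.
  set (w := fun N : nat => q ^ S (S N)).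
  assert (Hw : forall N, 0 < w N < 1) by (intros; apply qpow_range).
  assert (Hc : Un_cv w 0).
  { intros e He. destruct (pow_lt_1_zero q ltac:(rewrite Rabs_right; lra) e He) as [N HN].
    exists N. intros k Hk. unfold R_dist. rewrite Rminus_0_r. apply HN. lia. }
  assert (HA0 : Aq 0 = 0) by (unfold Aq; field; lra).
  assert (HB0 : Bq 0 = q) by (unfold Bq; field; lra).
  assert (Acont : continuity_pt Aq 0).
  { apply continuity_pt_filterlim. apply (ex_derive_continuous Aq).
    unfold Aq. auto_derive. lra. }
  assert (Bcont : continuity_pt Bq 0).
  { apply continuity_pt_filterlim. apply (ex_derive_continuous Bq).
    unfold Bq. auto_derive. lra. }
  assert (C1 := L_seq0 (fun k => Aq (w k)) (fun k => Aq_range _ (Hw k))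
     ltac:(rewrite <- HA0; apply continuity_seq; [exact Acont|exact Hc])).
  assert (C2' : Un_cv (fun k => Bq (w k)) q)
    by (rewrite <- HB0 at 1; apply continuity_seq; [exact Bcont|exact Hc]).
  assert (C2 := continuity_seq RogersL _ _ (L_cont q Hq) C2').
  assert (Hall := CV_minus _ _ _ _ (cv_const 0) (CV_minus _ _ _ _ C1 C2)).
  unfold infinite_sum.
  replace (RogersL q) with (0 - (0 - RogersL q)) by ring.
  intros e He. destruct (Hall e He) as [N HN]. exists N. intros k Hk.
  rewrite partial, Fq_q. apply HN, Hk.
Qed.
End Tele.

Lemma floor_eq (y : R) (z : Z) : IZR z <= y < IZR z + 1 -> floorR y = z.
Proof.
  intros [H1 H2]. unfold floorR. rewrite <- (up_tech y z H1).
  - lia.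
  - rewrite plus_IZR. exact H2.
Qed.

Lemma hk_fst u i : fst (cf_hk u (S i)) =
  (snd (fst (cf_hk u i)), (cf_coef u i * snd (fst (cf_hk u i)) + fst (fst (cf_hk u i)))%Z).
Proof. simpl. destruct (cf_hk u i) as [[h2 h1] [k2 k1]]. reflexivity. Qed.

Fixpoint sp (a : Z) (j : nat) : Z * Z :=
  match j with
  | O => (0%Z, 1%Z)
  | S j => let (s0, s1) := sp a j in (s1, (2 * a * s1 - s0)%Z)
  end.
Definition sZ a j := fst (sp a j).

Lemma sZ_0 a : sZ a 0 = 0%Z. Proof. reflexivity. Qed.
Lemma sZ_1 a : sZ a 1 = 1%Z. Proof. reflexivity. Qed.
Lemma sZ_SS a j : sZ a (S (S j)) = (2 * a * sZ a (S j) - sZ a j)%Z.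
Proof.
  unfold sZ. assert (H : forall j, snd (sp a j) = fst (sp a (S j))).
  { intros i. simpl. destruct (sp a i). reflexivity. }
  simpl. destruct (sp a j) as [s0 s1] eqn:E. simpl. reflexivity.
Qed.

Section CF.
Variables (u : R) (a : Z).
Hypothesis Ha : (1 <= a)%Z.
Hypothesis Hu : 2 < u.
Hypothesis Hux : u + / u = 2 * IZR a.

Definition vv := / (u - IZR (2 * a - 1)).
Definition ww := / (vv - IZR 1).

Lemma facts : 0 < / u < / 2 /\ vv = / (1 - / u) /\ ww = u - 1.
Proof.
  assert (Hx : 0 < / u < / 2).
  { split. - apply Rinv_0_lt_compat; lra. - apply Rinv_lt_contravar; lra. }
  assert (Hv : vv = / (1 - / u)).
  { unfold vv. f_equal. rewrite minus_IZR, mult_IZR. simpl (IZR 2). simpl (IZR 1). lra. }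
  split; [exact Hx|]. split; [exact Hv|].
  unfold ww. rewrite Hv. simpl (IZR 1). field. repeat split; lra.
Qed.

Lemma floor_u : floorR u = (2 * a - 1)%Z.
Proof.
  destruct facts as [Hx _]. apply floor_eq. rewrite minus_IZR, mult_IZR. simpl. lra.
Qed.

Lemma floor_v : floorR vv = 1%Z.
Proof.
  destruct facts as [Hx [Hv _]]. apply floor_eq. rewrite Hv. simpl (IZR 1). split.
  - rewrite <- Rinv_1. apply Rinv_le_contravar; lra.
  - apply (Rmult_lt_reg_r (1 - / u)); [lra|]. rewrite Rinv_l by lra. lra.
Qed.

Lemma floor_w : floorR ww = (2 * a - 2)%Z.
Proof.
  destruct facts as [Hx [_ Hw]]. apply floor_eq. rewrite Hw, minus_IZR, mult_IZR. simpl. lra.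
Qed.

Lemma rem_per j : cf_rem u (S (2 * j)) = vv /\ cf_rem u (S (S (2 * j))) = ww.
Proof.
  induction j as [|j [IH1 IH2]].
  - change (2 * 0)%nat with 0%nat. assert (E1 : cf_rem u 1 = vv).
    { change (cf_rem u 1) with (/ (u - IZR (floorR u))). rewrite floor_u. reflexivity. }
    split; [exact E1|].
    change (cf_rem u 2) with (/ (cf_rem u 1 - IZR (floorR (cf_rem u 1)))).
    rewrite E1, floor_v. reflexivity.
  - replace (2 * S j)%nat with (S (S (2 * j))) by lia.
    assert (E : cf_rem u (S (S (S (2 * j)))) = vv).
    { change (cf_rem u (S (S (S (2 * j))))) with (/ (cf_rem u (S (S (2 * j))) - IZR (floorR (cf_rem u (S (S (2 * j))))))).
      rewrite IH2, floor_w. destruct facts as [Hx [Hv Hw]].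
      unfold vv. f_equal. rewrite Hw, !minus_IZR, !mult_IZR. simpl. ring. }
    split; [exact E|].
    change (cf_rem u (S (S (S (S (2 * j)))))) with (/ (cf_rem u (S (S (S (2 * j)))) - IZR (floorR (cf_rem u (S (S (S (2 * j)))))))).
    rewrite E, floor_v. reflexivity.
Qed.

Lemma coef0 : cf_coef u 0 = (2 * a - 1)%Z.
Proof. unfold cf_coef. simpl. apply floor_u. Qed.
Lemma coef_odd j : cf_coef u (S (2 * j)) = 1%Z.
Proof. unfold cf_coef. rewrite (proj1 (rem_per j)). apply floor_v. Qed.
Lemma coef_even j : cf_coef u (S (S (2 * j))) = (2 * a - 2)%Z.
Proof. unfold cf_coef. rewrite (proj2 (rem_per j)). apply floor_w. Qed.

Lemma hk_claim k : fst (cf_hk u (S (S (2 * k)))) =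
  ((sZ a (k + 2) - sZ a (k + 1))%Z, sZ a (k + 2)).
Proof.
  induction k as [|k IH].
  - change (2 * 0)%nat with 0%nat. rewrite !hk_fst. simpl (cf_hk u 0). rewrite coef0.
    pose proof (coef_odd 0) as C1; simpl in C1; rewrite C1. cbn [fst snd]. change (0+2)%nat with (S (S 0)); change (0+1)%nat with 1%nat; rewrite sZ_SS, sZ_1, sZ_0. f_equal; ring.
  - replace (2 * S k)%nat with (S (S (2 * k))) by lia.
    rewrite (hk_fst u (S (S (S (2*k))))), (hk_fst u (S (S (2*k)))), IH. cbn [fst snd].
    rewrite (coef_even k). replace (S (S (S (2 * k)))) with (S (2 * (S k))) by lia.
    rewrite (coef_odd (S k)).
    replace (S k + 2)%nat with (S (S (k + 1))) by lia.
    replace (S k + 1)%nat with (k + 2)%nat by lia.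
    replace (k + 2)%nat with (S (S k)) by lia.
    replace (k + 1)%nat with (S k) by lia.
    rewrite (sZ_SS a (S k)). f_equal; ring.
Qed.

Lemma cf_h_odd k : cf_h u (2 * k + 1) = sZ a (k + 2).
Proof.
  unfold cf_h. replace (S (2 * k + 1)) with (S (S (2 * k))) by lia.
  rewrite hk_claim. reflexivity.
Qed.
End CF.

Lemma sZ_closed (a : Z) (x : R) (Hx : 2 * IZR a * x = 1 + x ^ 2) : forall j,
  IZR (sZ a (S j)) * x ^ j * (1 - x ^ 2) = 1 - (x ^ 2) ^ (S j).
Proof.
  assert (H : forall j, IZR (sZ a (S j)) * x ^ j * (1 - x ^ 2) = 1 - (x ^ 2) ^ (S j) /\
                        IZR (sZ a (S (S j))) * x ^ (S j) * (1 - x ^ 2) = 1 - (x ^ 2) ^ (S (S j))).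
  { induction j as [|j IH].
    - rewrite sZ_SS, sZ_1, sZ_0. split.
      + simpl. ring.
      + rewrite minus_IZR, mult_IZR, mult_IZR. simpl (IZR 2). simpl (IZR 1). simpl (IZR 0).
        replace (2 * IZR a * 1 - 0) with (2 * IZR a) by ring.
        simpl pow. rewrite Rmult_1_r.
        replace (2 * IZR a * x * (1 - x * x)) with ((2 * IZR a * x) * (1 - x * x)) by ring.
        rewrite Hx. simpl. ring.
    - destruct IH as [IH1 IH2]. split; [exact IH2|].
      rewrite sZ_SS, minus_IZR, !mult_IZR.
      transitivity (2 * IZR a * x * (IZR (sZ a (S (S j))) * x ^ S j * (1 - x ^ 2))
                    - x ^ 2 * (IZR (sZ a (S j)) * x ^ j * (1 - x ^ 2))).
      + rewrite <- !tech_pow_Rmult. simpl (IZR 2). ring.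
      + rewrite IH1, IH2, Hx. rewrite <- !tech_pow_Rmult. ring. }
  intro j; apply H.
Qed.

Lemma inf_sum_ext (f g : nat -> R) l : infinite_sum f l -> (forall k, f k = g k) -> infinite_sum g l.
Proof.
  intros H E e He. destruct (H e He) as [N HN]. exists N. intros k Hk.
  rewrite <- (sum_eq f g k) by (intros; apply E). apply HN, Hk.
Qed.

Theorem theorem2 (n a b : Z)
  (hn : (2 <= n)%Z)
  (hns : ~ (exists m : Z, (m * m)%Z = n))
  (ha : (0 < a)%Z) (hb : (0 < b)%Z)
  (hpell : (a * a - n * (b * b))%Z = 1%Z) :
  let u := IZR a + IZR b * sqrt (IZR n) in
  infinite_sum
    (fun k : nat => RogersL (/ (IZR (cf_h u (2 * k + 1))) ^ 2))
    (RogersL (/ u ^ 2)).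
Proof.
  intros u.
  set (r := sqrt (IZR n)) in u.
  assert (Hn : 2 <= IZR n) by (apply IZR_le in hn; exact hn).
  assert (Hrr : r * r = IZR n) by (apply sqrt_sqrt; lra).
  assert (Hr0 : 0 <= r) by apply sqrt_pos.
  assert (Hr : 1 < r) by nra.
  assert (Ha1 : 1 <= IZR a) by (apply IZR_le; lia).
  assert (Hb1 : 1 <= IZR b) by (apply IZR_le; lia).
  assert (Hp : IZR a * IZR a - IZR n * (IZR b * IZR b) = 1).
  { apply (f_equal IZR) in hpell. rewrite minus_IZR, !mult_IZR in hpell. exact hpell. }
  assert (Hu : 2 < u) by (unfold u; nra).
  assert (Hux1 : u * (IZR a - IZR b * r) = 1).
  { unfold u. replace ((IZR a + IZR b * r) * (IZR a - IZR b * r))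
      with (IZR a * IZR a - (r * r) * (IZR b * IZR b)) by ring. rewrite Hrr. exact Hp. }
  assert (Hinv : / u = IZR a - IZR b * r).
  { apply (Rmult_eq_reg_l u); [|lra]. rewrite Rinv_r by lra. lra. }
  assert (Hux : u + / u = 2 * IZR a) by (rewrite Hinv; unfold u; ring).
  set (x := / u).
  assert (Hx : 0 < x < / 2).
  { split. - apply Rinv_0_lt_compat; lra. - apply Rinv_lt_contravar; lra. }
  assert (Hq : / u ^ 2 = x ^ 2) by (unfold x; rewrite pow_inv; reflexivity).
  assert (Hq1 : 0 < x ^ 2 < 1) by (destruct Hx; split; [apply pow_lt; lra|apply pow_lt_1_compat; [lra|lia]]).
  assert (H2ax : 2 * IZR a * x = 1 + x ^ 2).
  { rewrite <- Hux. unfold x. simpl. field. lra. }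
  rewrite Hq.
  apply (inf_sum_ext _ _ _ (tele (x ^ 2) Hq1)).
  intros k.
  rewrite (cf_h_odd u a Hu Hux k).
  f_equal.
  replace (k + 2)%nat with (S (S k)) by lia.
  pose proof (sZ_closed a x H2ax (S k)) as HC.
  set (P := IZR (sZ a (S (S k)))) in *.
  set (X := x ^ S k) in *.
  assert (HX : 0 < X) by (apply pow_lt; lra).
  assert (Hpos : 0 < 1 - (x ^ 2) ^ S (S k)).
  { assert ((x ^ 2) ^ S (S k) < 1) by (apply pow_lt_1_compat; [lra|lia]). lra. }
  assert (HP : P <> 0) by (intro E; rewrite E in HC; lra).
  unfold Tq.
  replace ((x ^ 2) ^ S k) with (X ^ 2) by (unfold X; rewrite <- !pow_mult, Nat.mul_comm; reflexivity).
  replace (1 - x ^ 2 * X ^ 2) with (P * X * (1 - x ^ 2)).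
  - field. repeat split; lra.
  - rewrite HC. unfold X. rewrite <- (tech_pow_Rmult (x ^ 2) (S k)).
    rewrite <- !pow_mult, Nat.mul_comm. reflexivity.
Qed.
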